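(* Let $\mathcal{N}$ be a nonsingular 2-step nilpotent Lie algebra over $\mathbb{R}$. If $\mathcal{N}$ satisfies the partial automatic continuity, then so does $\mathcal{N}\oplus\mathcal{N}$.
   Context: A 2-step nilpotent Lie algebra $\mathcal{N}$ with center $\mathfrak{z}$ is nonsingular if $\operatorname{ad}X:\mathcal{N}\to[\mathcal{N},\mathcal{N}]$ is surjective for every $X\in\mathcal{N}\setminus\mathfrak{z}$. A Lie ring automorphism is a bijective additive bracket-preserving map (not necessarily $\mathbb{R}$-linear); a central automorphism is a Lie ring automorphism $\mu$ with $\mu(x)-x$ central for all $x$. Field automorphisms: if a Lie algebra is a direct sum of ideals $\mathcal{N}_1\oplus\cdots\oplus\mathcal{N}_k$, for each $\mathcal{N}_i$ that is the realification of a complex Lie algebra choose a $\mathbb{C}$-basis $e_1,\dots,e_m$ and a field automorphism $\varphi$ of $\mathbb{C}$ fixing the structure constants and set $\sigma_i(\sum x_le_l)=\sum\varphi(x_l)e_l$, otherwise $\sigma_i=\mathrm{id}$; $\sigma_1\times\cdots\times\sigma_k$ is a field automorphism. A real nilpotent Lie algebra satisfies the partial automatic continuity if every Lie ring automorphism is a composition $\mu\circ\overline{f}\circ\sigma$ of a central automorphism, an $\mathbb{R}$-linear Lie algebra automorphism and a field automorphism. *)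

(* Defs.v *)
From HB Require Import structures.
From mathcomp Require Import all_boot all_order all_algebra.
From mathcomp Require Import reals.
From mathcomp Require Import complex.
Set Implicit Arguments. Unset Strict Implicit. Unset Printing Implicit Defensive.
Import Order.TTheory GRing.Theory Num.Theory.
Local Open Scope ring_scope.

Section Lie.
Variables (R : realType) (V : vectType R).
Implicit Types (br : V -> V -> V).

Definition lie_bracket br : Prop :=
  [/\ forall a x y z, br (a *: x + y) z = a *: br x z + br y z,
      forall a x y z, br x (a *: y + z) = a *: br x y + br x z,
      forall x, br x x = 0 &
      forall x y z, br x (br y z) + br y (br z x) + br z (br x y) = 0].

Definition central br (x : V) : Prop := forall y, br x y = 0.

(* [N,N] : the real span of all brackets (= the set of finite sums of
   brackets, by bilinearity) *)
Definition derived br (y : V) : Prop :=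
  exists s : seq (V * V), y = \sum_(p <- s) br p.1 p.2.

Definition two_step_nilpotent br : Prop :=
  (forall x y z, br x (br y z) = 0) /\ (exists x y, br x y != 0).

Definition nonsingular br : Prop :=
  forall X, ~ central br X -> forall y, derived br y -> exists z, br X z = y.

Definition lie_ring_aut br (f : V -> V) : Prop :=
  [/\ bijective f, forall x y, f (x + y) = f x + f y &
      forall x y, f (br x y) = br (f x) (f y)].

Definition central_aut br (mu : V -> V) : Prop :=
  lie_ring_aut br mu /\ forall x, central br (mu x - x).

Definition lie_alg_aut br (f : V -> V) : Prop :=
  lie_ring_aut br f /\ forall (a : R) x, f (a *: x) = a *: f x.

Definition cscale (J : V -> V) (z : R[i]) (v : V) : V :=
  (complex.Re z) *: v + (complex.Im z) *: J v.

(* N_i (an ideal) is the realification of a complex Lie algebra with complex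
   structure J, e : 'I_m -> V is a C-basis of N_i, phi is a field
   automorphism of C fixing the structure constants in this basis, and
   s(sum_l x_l e_l) = sum_l phi(x_l) e_l on N_i. *)
Definition complex_field_aut_on br (Ni : {vspace V}) (s : V -> V) : Prop :=
  exists (J : V -> V) (m : nat) (e : 'I_m -> V) (phi : {rmorphism R[i] -> R[i]}),
  [/\
      [/\ forall (a : R) x y, J (a *: x + y) = a *: J x + J y,
          forall x, x \in Ni -> J x \in Ni,
          forall x, x \in Ni -> J (J x) = - x &
          forall x y, x \in Ni -> y \in Ni -> br (J x) y = J (br x y)],
      [/\ forall l, e l \in Ni,
          forall v, v \in Ni -> exists c : 'I_m -> R[i],
                      v = \sum_(l < m) cscale J (c l) (e l) &
          forall c c' : 'I_m -> R[i],
            \sum_(l < m) cscale J (c l) (e l) = \sum_(l < m) cscale J (c' l) (e l) ->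
            forall l, c l = c' l],
      bijective phi,
      (exists a : 'I_m -> 'I_m -> 'I_m -> R[i],
         (forall p q, br (e p) (e q) = \sum_(l < m) cscale J (a p q l) (e l)) /\
         (forall p q l, phi (a p q l) = a p q l)) &
      forall c : 'I_m -> R[i],
        s (\sum_(l < m) cscale J (c l) (e l))
        = \sum_(l < m) cscale J (phi (c l)) (e l)].

Definition ideal br (U : {vspace V}) : Prop :=
  forall x y, x \in U -> br x y \in U.

Definition field_aut br (sigma : V -> V) : Prop :=
  exists (k : nat) (Ni : 'I_k -> {vspace V}) (s : 'I_k -> V -> V),
  [/\ forall i, ideal br (Ni i),
      directv (\sum_(i < k) Ni i)%VS,
      (\sum_(i < k) Ni i)%VS = fullv,
      forall i, (forall x, x \in Ni i -> s i x = x) \/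
                complex_field_aut_on br (Ni i) (s i) &
      forall v : 'I_k -> V, (forall i, v i \in Ni i) ->
        sigma (\sum_(i < k) v i) = \sum_(i < k) s i (v i)].

Definition partial_automatic_continuity br : Prop :=
  forall g, lie_ring_aut br g ->
    exists mu f sigma, [/\ central_aut br mu, lie_alg_aut br f,
                          field_aut br sigma &
                          forall x, g x = mu (f (sigma x))].

End Lie.

Definition prod_bracket (R : realType) (V : vectType R) (br : V -> V -> V)
  (x y : V * V) : V * V := (br x.1 y.1, br x.2 y.2).

(* Main.v *)
Require Import Defs.
From HB Require Import structures.
From mathcomp Require Import all_boot all_order all_algebra.
From mathcomp Require Import reals.
From mathcomp Require Import complex.
From Stdlib Require Import Classical.
Set Implicit Arguments. Unset Strict Implicit. Unset Printing Implicit Defensive.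
Import Order.TTheory GRing.Theory Num.Theory.
Local Open Scope ring_scope.

Section Lin.
Variables (R : realType) (U W : vectType R).
Definition linof (f : U -> W) : 'Hom(U, W) := linfun f.
Lemma linofE (f : U -> W) : (forall (a : R) x y, f (a *: x + y) = a *: f x + f y) ->
  forall v, linof f v = f v.
Proof.
move=> Hf v.
pose F : {linear U -> W} := HB.pack f (GRing.isLinear.Build _ _ _ _ f Hf).
exact: (lfunE F v).
Qed.
End Lin.

Section Basic.
Variables (R : realType) (V : vectType R) (br : V -> V -> V).
Variable Hlb : lie_bracket br.

Lemma brL a x y z : br (a *: x + y) z = a *: br x z + br y z.
Proof. by case: Hlb. Qed.
Lemma brR a x y z : br x (a *: y + z) = a *: br x y + br x z.
Proof. by case: Hlb. Qed.
Lemma brDl x y z : br (x + y) z = br x z + br y z.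
Proof. by have := brL 1 x y z; rewrite !scale1r. Qed.
Lemma brDr x y z : br x (y + z) = br x y + br x z.
Proof. by have := brR 1 x y z; rewrite !scale1r. Qed.
Lemma br0l z : br 0 z = 0.
Proof. by apply: (addrI (br 0 z)); rewrite -brDl !addr0. Qed.
Lemma br0r z : br z 0 = 0.
Proof. by apply: (addrI (br z 0)); rewrite -brDr !addr0. Qed.
Lemma brZl a x z : br (a *: x) z = a *: br x z.
Proof. by have := brL a x 0 z; rewrite !addr0 br0l addr0. Qed.
Lemma brZr a x z : br z (a *: x) = a *: br z x.
Proof. by have := brR a z x 0; rewrite !addr0 br0r addr0. Qed.
Lemma brNl x z : br (- x) z = - br x z.
Proof. by apply: (addrI (br x z)); rewrite -brDl !subrr br0l. Qed.
Lemma brNr x z : br z (- x) = - br z x.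
Proof. by apply: (addrI (br z x)); rewrite -brDr !subrr br0r. Qed.
Lemma brBl x y z : br (x - y) z = br x z - br y z.
Proof. by rewrite brDl brNl. Qed.

Lemma centralD x y : central br x -> central br y -> central br (x + y).
Proof. by move=> Hx Hy z; rewrite brDl Hx Hy addr0. Qed.
Lemma centralN x : central br x -> central br (- x).
Proof. by move=> Hx z; rewrite brNl Hx oppr0. Qed.
Lemma centralB x y : central br x -> central br y -> central br (x - y).
Proof. by move=> Hx Hy; apply: centralD => //; apply: centralN. Qed.
Lemma central0 : central br 0.
Proof. by move=> z; rewrite br0l. Qed.

Lemma derived_br x y : derived br (br x y).
Proof. by exists [:: (x, y)]; rewrite big_seq1. Qed.

Variable Hns : nonsingular br.

Lemma pi_exists X0 : ~ central br X0 ->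
  exists pi : V -> V, [/\ forall x y, pi (x + y) = pi x + pi y,
     forall x, pi (pi x) = pi x,
     forall x, derived br x -> pi x = 0,
     forall x, central br (pi x) &
     forall e, central br e -> derived br (e - pi e)].
Proof.
move=> HX0.
have linX0 : forall (a : R) x y, br X0 (a *: x + y) = a *: br X0 x + br X0 y.
  by move=> a x y; apply: brR.
pose Dv := limg (linof (br X0)).
pose Phi := fun x => linof (br x).
have linPhi : forall (a : R) x y, Phi (a *: x + y) = a *: Phi x + Phi y.
  move=> a x y; apply/lfunP => v.
  rewrite add_lfunE scale_lfunE /Phi !linofE; first exact: brL.
  - by move=> b u w; exact: brR.
  - by move=> b u w; exact: brR.
  - by move=> b u w; exact: brR.
pose Zv := lker (linof Phi).
have memZ : forall x, (x \in Zv) <-> central br x.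
  move=> x; rewrite memv_ker linofE //; split.
    move/eqP => H y; have := congr1 (fun f : 'Hom(V, V) => f y) H.
    by rewrite /= zero_lfunE /Phi linofE //; move=> b u w; exact: brR.
  move=> Hc; apply/eqP/lfunP => y; rewrite zero_lfunE /Phi linofE ?Hc //.
  by move=> b u w; exact: brR.
have memD : forall x, (x \in Dv) <-> exists y, x = br X0 y.
  move=> x; split.
    by case/memv_imgP => y _ ->; exists y; rewrite linofE.
  by case=> y ->; rewrite -linofE //; apply: memv_img; apply: memvf.
pose pi := fun x => addv_pi1 Zv Dv x.
have piD : forall x, x \in Dv -> pi x = 0.
  move=> x Hx; have := addv_pi1_pi2 (subvP (addvSr Zv Dv) _ Hx).
  by rewrite addv_pi2_id // /pi => H; apply: (addIr x); rewrite add0r.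
exists pi; split.
- by move=> x y; rewrite /pi linearD.
- by move=> x; rewrite /pi addv_pi1_proj.
- move=> x Hx; apply: piD; apply/memD; have [z <-] := Hns HX0 Hx; by exists z.
- by move=> x; apply/memZ; apply: memv_pi1.
- move=> e He; have He' : e \in (Zv + Dv)%VS by apply: (subvP (addvSl Zv Dv)); apply/memZ.
  have := addv_pi1_pi2 He' => Hsum.
  have -> : e - pi e = addv_pi2 Zv Dv e by rewrite -{1}Hsum /pi addrC addKr.
  by have [y ->] := (memD _).1 (memv_pi2 Zv Dv e); apply: derived_br.
Qed.
End Basic.

Lemma bij_of (T : choiceType) (U : eqType) (f : T -> U) :
  injective f -> (forall y, exists x, f x = y) -> bijective f.
Proof.
move=> Hi Hs.
have Hs' : forall y, exists x, f x == y by move=> y; have [x Hx] := Hs y; exists x; apply/eqP.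
exists (fun y => xchoose (Hs' y)).
  by move=> x; apply: Hi; apply/eqP; apply: (xchooseP (Hs' (f x))).
by move=> y; apply/eqP; apply: (xchooseP (Hs' y)).
Qed.

Section Aut.
Variables (R : realType) (W : vectType R) (b : W -> W -> W).
Variable Hlb : lie_bracket b.

Lemma add_inj (f : W -> W) : (forall x y, f (x + y) = f x + f y) ->
  (forall x, f x = 0 -> x = 0) -> injective f.
Proof.
move=> HD H0 x y Hxy; apply/eqP; rewrite -subr_eq0; apply/eqP; apply: H0.
have Hf0 : f 0 = 0 by apply: (addrI (f 0)); rewrite -HD !addr0.
have HN : f (- y) = - f y by apply: (addrI (f y)); rewrite -HD !subrr.
by rewrite HD HN Hxy subrr.
Qed.

Lemma add0 (f : W -> W) : (forall x y, f (x + y) = f x + f y) -> f 0 = 0.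
Proof. by move=> HD; apply: (addrI (f 0)); rewrite -HD !addr0. Qed.
Lemma addN (f : W -> W) : (forall x y, f (x + y) = f x + f y) -> forall x, f (- x) = - f x.
Proof. by move=> HD x; apply: (addrI (f x)); rewrite -HD !subrr (add0 HD). Qed.
Lemma addB (f : W -> W) : (forall x y, f (x + y) = f x + f y) -> forall x y, f (x - y) = f x - f y.
Proof. by move=> HD x y; rewrite HD (addN HD). Qed.

Lemma lra_inj f : lie_ring_aut b f -> injective f.
Proof. by case=> /bij_inj. Qed.
Lemma lra_add f : lie_ring_aut b f -> forall x y, f (x + y) = f x + f y.
Proof. by case. Qed.
Lemma lra_br f : lie_ring_aut b f -> forall x y, f (b x y) = b (f x) (f y).
Proof. by case. Qed.
Lemma lra_surj f : lie_ring_aut b f -> forall y, exists x, f x = y.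
Proof. by case=> [[g _ Hg]] _ _ y; exists (g y). Qed.

Lemma lra_comp f g : lie_ring_aut b f -> lie_ring_aut b g -> lie_ring_aut b (f \o g).
Proof.
case=> Bf Af Cf [Bg Ag Cg]; split; first exact: bij_comp.
  by move=> x y /=; rewrite Ag Af.
by move=> x y /=; rewrite Cg Cf.
Qed.

Lemma lra_ext f g : f =1 g -> lie_ring_aut b f -> lie_ring_aut b g.
Proof.
move=> E [Bf Af Cf]; split; first exact: (eq_bij Bf E).
  by move=> x y; rewrite -!E.
by move=> x y; rewrite -!E.
Qed.

Lemma lra_inv f : lie_ring_aut b f ->
  exists g, [/\ lie_ring_aut b g, cancel f g & cancel g f].
Proof.
move=> Hf; case: (Hf) => [[g K1 K2]] Af Cf; exists g; split => //; split.
- by exists f.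
- by move=> x y; apply: (lra_inj Hf); rewrite Af !K2.
- by move=> x y; apply: (lra_inj Hf); rewrite Cf !K2.
Qed.

Lemma lra_central f x : lie_ring_aut b f -> central b x -> central b (f x).
Proof.
move=> Hf Hx y; have [z <-] := lra_surj Hf y.
by rewrite -(lra_br Hf) Hx (add0 (lra_add Hf)).
Qed.

Lemma decomp_from G H f s : lie_ring_aut b G -> lie_ring_aut b H ->
  (forall x, central b (G x - H x)) -> lie_alg_aut b f -> field_aut b s ->
  (forall x, H x = f (s x)) ->
  exists mu f s, [/\ central_aut b mu, lie_alg_aut b f,
                    field_aut b s & forall x, G x = mu (f (s x))].
Proof.
move=> HG HH HC Hf Hs Hfs.
have [Hi [HHi K1 K2]] := lra_inv HH.
exists (G \o Hi), f, s; split => //.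
- split; first exact: lra_comp.
  by move=> x /=; have := HC (Hi x); rewrite K2.
- by move=> x /=; rewrite -Hfs K1.
Qed.

End Aut.

Section K.
Variables (R : realType) (V : vectType R) (br : V -> V -> V).
Variable Hlb : lie_bracket br.
Variable Hns : nonsingular br.

Lemma brC x y : br x y = - br y x.
Proof.
have [_ _ H _] := Hlb.
have := H (x + y); rewrite (brDl Hlb) !(brDr Hlb) !H add0r addr0 => /eqP.
by rewrite addr_eq0 => /eqP.
Qed.

Lemma central_r c x : central br c -> br x c = 0.
Proof. by move=> Hc; rewrite brC Hc oppr0. Qed.

Lemma k_exists (al : V -> V) X0 : ~ central br X0 ->
  (forall x y, al (x + y) = al x + al y) ->
  (forall x y, al (br x y) = br (al x) (al y)) ->
  (forall x, central br (al x) -> central br x) ->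
  (forall y, exists x, central br (y - al x)) ->
  (forall c, central br c -> central br (al c)) ->
  (forall d, derived br d -> al d = 0 -> d = 0) ->
  (forall d, derived br d -> exists d', derived br d' /\ al d' = d) ->
  (forall d, derived br d -> derived br (al d)) ->
  exists k, lie_ring_aut br k /\ forall x, central br (al x - k x).
Proof.
move=> HX0 P1 P2 P3 P4 P5 P6 P7 P8.
have [pi [piD pipi piDer piC piE]] := pi_exists Hlb Hns HX0.
have alB := addB P1.
have piB := addB piD.
pose k x := al (x - pi x) + pi x.
have kD : forall x y, k (x + y) = k x + k y.
  move=> x y; rewrite /k piD.
  have -> : x + y - (pi x + pi y) = (x - pi x) + (y - pi y).
    by rewrite opprD addrACA.
  by rewrite P1 addrACA.
have kal : forall x, central br (al x - k x).
  move=> x; rewrite /k alB opprD addrA.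
  have -> : al x - (al x - al (pi x)) = al (pi x) by rewrite opprB addrC subrK.
  by apply: (centralB Hlb); [apply: P5 | ].
have kinj : injective k.
  apply: add_inj => // x Hx.
  have Hc : central br (x - pi x).
    apply: P3; have -> : al (x - pi x) = - pi x by apply/eqP; rewrite -addr_eq0; apply/eqP.
    exact: (centralN Hlb).
  have He : derived br (x - pi x).
    by have := piE _ Hc; rewrite piB pipi subrr subr0.
  have Hal : al (x - pi x) = - pi x by apply/eqP; rewrite -addr_eq0; apply/eqP.
  have Hpx : pi x = 0.
    have := piDer _ (P8 _ He); rewrite Hal (addN piD) pipi => /eqP.
    by rewrite oppr_eq0 => /eqP.
  by have := P6 _ He; rewrite Hal Hpx oppr0 addr0; apply.
have ksurj : forall y, exists x, k x = y.
  move=> y; have [x Hx] := P4 y.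
  pose e := y - k x.
  have Hec : central br e.
    rewrite /e; have -> : y - k x = (y - al x) + (al x - k x) by rewrite addrA subrK.
    by apply: (centralD Hlb).
  have [d' [Hd' Hd'e]] := P7 _ (piE _ Hec).
  exists (x + d' + pi e); rewrite !kD.
  have -> : k d' = al d' by rewrite /k (piDer _ Hd') subr0 addr0.
  have -> : k (pi e) = pi e by rewrite /k pipi subrr (add0 P1) add0r.
  by rewrite Hd'e -addrA subrK /e addrC subrK.
exists k; split => //; split.
- exact: bij_of.
- exact: kD.
- move=> x y; rewrite /k (piDer _ (derived_br br x y)) !subr0 addr0 P2.
  rewrite !alB !(brDl Hlb) !(brDr Hlb) !(brNl Hlb) !(brNr Hlb).
  have C1 := piC x; have C2 := piC y.
  have C3 := P5 _ (piC x); have C4 := P5 _ (piC y).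
  rewrite C1 C3 !(central_r _ C2) !(central_r _ C4).
  by rewrite !oppr0 !addr0.
Qed.

Lemma pac_step k : partial_automatic_continuity br -> lie_ring_aut br k ->
  exists h f s, [/\ lie_ring_aut br h, lie_alg_aut br f, field_aut br s,
     forall x, h x = f (s x) & forall x, central br (k x - h x)].
Proof.
move=> Hpac Hk; have [mu [f [s [[Hmu Cmu] Hf Hs E]]]] := Hpac k Hk.
have [mi [Hmi K1 K2]] := lra_inv Hmu.
exists (mi \o k), f, s; split => //.
- exact: lra_comp.
- by move=> x /=; rewrite E K1.
- by move=> x /=; rewrite E K1.
Qed.
End K.

Section Prod.
Variables (R : realType) (V : vectType R) (br : V -> V -> V).
Variable Hlb : lie_bracket br.
Variable Hns : nonsingular br.
Local Notation pb := (prod_bracket br).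
Local Notation P := (V * V)%type.

Lemma pbE (p q : P) : pb p q = (br p.1 q.1, br p.2 q.2).
Proof. by []. Qed.
Lemma pairD (a b c d : V) : ((a, b) + (c, d) : P) = (a + c, b + d).
Proof. by []. Qed.
Lemma pairN (a b : V) : (- (a, b) : P) = (- a, - b).
Proof. by []. Qed.
Lemma pairZ (r : R) (a b : V) : (r *: (a, b) : P) = (r *: a, r *: b).
Proof. by []. Qed.
Lemma pair0 : (0 : P) = (0, 0).
Proof. by []. Qed.
Lemma pair_split (p : P) : p = (p.1, 0) + (0, p.2).
Proof. by case: p => a b; rewrite pairD addr0 add0r. Qed.

Lemma central_pb (p : P) : central pb p <-> central br p.1 /\ central br p.2.
Proof.
split.
  move=> H; split=> y.
    by have := congr1 fst (H (y, 0)).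
  by have := congr1 snd (H (0, y)).
by case=> H1 H2 q; rewrite pbE H1 H2.
Qed.

Lemma pb_l x y : pb (x, 0) (y, 0) = (br x y, 0).
Proof. by rewrite pbE /= br0l. Qed.
Lemma pb_r x y : pb (0, x) (0, y) = (0, br x y).
Proof. by rewrite pbE /= br0l. Qed.

Definition swp (p : P) : P := (p.2, p.1).
Lemma swpK : involutive swp. Proof. by case. Qed.
Lemma swp_lra : lie_ring_aut pb swp.
Proof. split; [by exists swp; apply: swpK | by case=> ? ? [] | by case=> ? ? []]. Qed.
Lemma swp_laa : lie_alg_aut pb swp.
Proof. by split; [exact: swp_lra | move=> a []]. Qed.

Variables (x0 y0 : V).
Variable Hxy : br x0 y0 != 0.
Local Notation d0 := (br x0 y0).

Lemma x0_nc : ~ central br x0.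
Proof. by move=> H; move: Hxy; rewrite H eqxx. Qed.

Lemma G0 G : lie_ring_aut pb G -> G 0 = 0.
Proof. by move=> HG; apply: add0 (lra_add HG). Qed.

Lemma L1a G : lie_ring_aut pb G ->
  ~ (central br (G (x0, 0)).1 /\ central br (G (x0, 0)).2).
Proof.
move=> HG [Ha Hb].
have : G (d0, 0) = 0.
  by rewrite -pb_l (lra_br HG) pbE Ha Hb.
rewrite -(G0 HG) => /(lra_inj HG) /(congr1 fst) /= H.
by move: Hxy; rewrite H eqxx.
Qed.

Lemma L1b G : lie_ring_aut pb G ->
  ~ (~ central br (G (x0, 0)).1 /\ ~ central br (G (x0, 0)).2).
Proof.
move=> HG [Ha Hb].
have E : G (0, d0) = pb (G (0, x0)) (G (0, y0)) by rewrite -(lra_br HG) pb_r.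
have [z1 Hz1] := Hns Ha (derived_br br (G (0, x0)).1 (G (0, y0)).1).
have [z2 Hz2] := Hns Hb (derived_br br (G (0, x0)).2 (G (0, y0)).2).
have [w Hw] := lra_surj HG (z1, z2).
have : G (0, d0) = G (br x0 w.1, 0).
  rewrite E; have -> : ((br x0 w.1, 0) : P) = pb (x0, 0) w by rewrite pbE /= br0l.
  by rewrite (lra_br HG) Hw !pbE /= Hz1 Hz2.
move/(lra_inj HG)/(congr1 snd) => /= H.
by move: Hxy; rewrite H eqxx.
Qed.

Lemma L2a G : lie_ring_aut pb G -> ~ central br (G (x0, 0)).1 ->
  forall d, derived br d -> (G (d, 0)).2 = 0.
Proof.
move=> HG Ha d Hd.
have Hb : central br (G (x0, 0)).2.
  by apply: NNPP => Hb; apply: (L1b HG).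
have [y <-] := Hns x0_nc Hd.
by rewrite -pb_l (lra_br HG) pbE /= Hb.
Qed.

Lemma L2b G : lie_ring_aut pb G -> ~ central br (G (x0, 0)).1 ->
  forall X, central br (G (X, 0)).2.
Proof.
move=> HG Ha X; apply: NNPP => Hb.
have [z2 Hz2] := Hns Hb (derived_br br x0 y0).
have [w Hw] := lra_surj HG (0, z2).
have : (G (br X w.1, 0)).2 = d0.
  have -> : (br X w.1, 0) = pb (X, 0) w by rewrite pbE /= br0l.
  by rewrite (lra_br HG) Hw pbE /= Hz2.
rewrite (L2a HG Ha (derived_br br X w.1)) => H.
by move: Hxy; rewrite -H eqxx.
Qed.

Lemma L2c G : lie_ring_aut pb G -> ~ central br (G (x0, 0)).1 ->
  forall d, derived br d -> exists d', derived br d' /\ G (d', 0) = (d, 0).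
Proof.
move=> HG Ha d Hd.
have Hb : central br (G (x0, 0)).2.
  by apply: NNPP => Hb; apply: (L1b HG).
have [y' Hy'] := Hns Ha Hd.
have [w Hw] := lra_surj HG (y', 0).
exists (br x0 w.1); split; first exact: derived_br.
have -> : (br x0 w.1, 0) = pb (x0, 0) w by rewrite pbE /= br0l.
by rewrite (lra_br HG) Hw pbE /= Hy' br0r.
Qed.

Lemma L3 G : lie_ring_aut pb G -> ~ central br (G (x0, 0)).1 ->
  central br (G (0, x0)).1.
Proof.
move=> HG Ha; apply: NNPP => Hu.
have Hd' : derived br (G (d0, 0)).1.
  by rewrite -pb_l (lra_br HG) pbE; apply: derived_br.
have [y Hy] := Hns Hu Hd'.
have [w Hw] := lra_surj HG (y, 0).
have : G (0, br x0 w.2) = G (d0, 0).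
  have -> : ((0, br x0 w.2) : P) = pb (0, x0) w by rewrite pbE /= br0l.
  rewrite (lra_br HG) Hw pbE /= Hy br0r.
  rewrite [RHS]surjective_pairing (L2a HG Ha (derived_br br x0 y0)).
  - by congr pair.
  - by [].
move/(lra_inj HG)/(congr1 fst) => /= H.
by move: Hxy; rewrite -H eqxx.
Qed.

End Prod.

Lemma laa_comp (R : realType) (W : vectType R) (b : W -> W -> W) f g :
  lie_alg_aut b f -> lie_alg_aut b g -> lie_alg_aut b (f \o g).
Proof.
case=> Hf Zf [Hg Zg]; split; first exact: lra_comp.
by move=> a x /=; rewrite Zg Zf.
Qed.

Section Transfer.
Variables (R : realType) (V W : vectType R) (br : V -> V -> V) (bW : W -> W -> W).
Variables (io : V -> W) (ro : W -> V).
Hypothesis ioL : forall (a : R) x y, io (a *: x + y) = a *: io x + io y.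
Hypothesis roL : forall (a : R) x y, ro (a *: x + y) = a *: ro x + ro y.
Hypothesis roio : forall x, ro (io x) = x.
Hypothesis iobr : forall x y, bW (io x) (io y) = io (br x y).

Lemma ioD x y : io (x + y) = io x + io y.
Proof. by have := ioL 1 x y; rewrite !scale1r. Qed.
Lemma io0 : io 0 = 0.
Proof. by apply: (addrI (io 0)); rewrite -ioD !addr0. Qed.
Lemma ioZ (a : R) x : io (a *: x) = a *: io x.
Proof. by have := ioL a x 0; rewrite !addr0 io0 addr0. Qed.
Lemma roD x y : ro (x + y) = ro x + ro y.
Proof. by have := roL 1 x y; rewrite !scale1r. Qed.
Lemma ro0 : ro 0 = 0.
Proof. by apply: (addrI (ro 0)); rewrite -roD !addr0. Qed.
Lemma roZ (a : R) x : ro (a *: x) = a *: ro x.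
Proof. by have := roL a x 0; rewrite !addr0 ro0 addr0. Qed.
Lemma io_inj : injective io.
Proof. by move=> x y H; rewrite -(roio x) H roio. Qed.

Lemma io_sum m (F : 'I_m -> V) : io (\sum_(l < m) F l) = \sum_(l < m) io (F l).
Proof. exact: (big_morph io ioD io0). Qed.

Lemma cfa_transfer (Ni : {vspace V}) (Nj : {vspace W}) (s : V -> V) :
  (forall p, p \in Nj <-> exists2 u, u \in Ni & p = io u) ->
  complex_field_aut_on br Ni s -> complex_field_aut_on bW Nj (io \o s \o ro).
Proof.
move=> memN [J [m [e [phi [[JL JN JJ Jbr] [eN eS eU] Bphi [a [Ha Hphia]] Hs]]]]].
pose J' := io \o J \o ro.
have csc : forall c x, cscale J' c (io x) = io (cscale J c x).
  by move=> c x; rewrite /cscale /J' /= roio ioD !ioZ.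
have cssum : forall c : 'I_m -> R[i], \sum_(l < m) cscale J' (c l) (io (e l))
    = io (\sum_(l < m) cscale J (c l) (e l)).
  by move=> c; rewrite io_sum; apply: eq_bigr => l _; rewrite csc.
exists J', m, (io \o e), phi; split => //.
- split.
  + by move=> r x y; rewrite /J' /= roL JL ioL.
  + move=> x /memN [u Hu ->]; apply/memN; exists (J u); first exact: JN.
    by rewrite /J' /= roio.
  + move=> x /memN [u Hu ->]; rewrite /J' /= !roio (JJ _ Hu).
    by have := ioZ (-1) u; rewrite !scaleN1r.
  + move=> x y /memN [u Hu ->] /memN [v Hv ->].
    by rewrite /J' /= !iobr roio (Jbr _ _ Hu Hv) roio.
- split.
  + by move=> l; apply/memN; exists (e l).
  + move=> v /memN [u Hu ->]; have [c Hc] := eS u Hu; exists c.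
    by rewrite Hc /= cssum.
  + move=> c c' /=; rewrite !cssum => /io_inj; exact: eU.
- exists a; split; last exact: Hphia.
  by move=> p q /=; rewrite iobr Ha cssum.
- by move=> c /=; rewrite cssum /= roio Hs cssum.
Qed.
End Transfer.


Section ProdF.
Variables (R : realType) (V : vectType R) (br : V -> V -> V).
Variable Hlb : lie_bracket br.
Local Notation pb := (prod_bracket br).
Local Notation P := (V * V)%type.

Definition il (x : V) : P := (x, 0).
Definition ir (x : V) : P := (0, x).
Lemma ilL (a : R) x y : il (a *: x + y) = a *: il x + il y.
Proof. by rewrite /il pairZ pairD scaler0 addr0. Qed.
Lemma irL (a : R) x y : ir (a *: x + y) = a *: ir x + ir y.
Proof. by rewrite /ir pairZ pairD scaler0 addr0. Qed.

Lemma memLl (U : {vspace V}) p :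
  p \in (linof il @: U)%VS <-> exists2 u, u \in U & p = il u.
Proof.
split; first by case/memv_imgP => u Hu ->; exists u; rewrite ?linofE //; exact: ilL.
by case=> u Hu ->; rewrite -linofE; [apply: memv_img | exact: ilL].
Qed.
Lemma memLr (U : {vspace V}) p :
  p \in (linof ir @: U)%VS <-> exists2 u, u \in U & p = ir u.
Proof.
split; first by case/memv_imgP => u Hu ->; exists u; rewrite ?linofE //; exact: irL.
by case=> u Hu ->; rewrite -linofE; [apply: memv_img | exact: irL].
Qed.

Lemma fst_sum n (F : 'I_n -> P) : (\sum_(i < n) F i).1 = \sum_(i < n) (F i).1.
Proof. exact: (big_morph fst (fun x y => erefl) erefl). Qed.
Lemma snd_sum n (F : 'I_n -> P) : (\sum_(i < n) F i).2 = \sum_(i < n) (F i).2.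
Proof. exact: (big_morph snd (fun x y => erefl) erefl). Qed.
Lemma pair_sum n (F G : 'I_n -> V) :
  \sum_(i < n) ((F i, G i) : P) = (\sum_(i < n) F i, \sum_(i < n) G i).
Proof. by rewrite [LHS]surjective_pairing fst_sum snd_sum. Qed.

Lemma split_l m n (j : 'I_m) : split (lshift n j) = inl j.
Proof. exact: (unsplitK (inl j)). Qed.
Lemma split_r m n (j : 'I_n) : split (rshift m j) = inr j.
Proof. exact: (unsplitK (inr j)). Qed.

Definition pm (f g : V -> V) (p : P) : P := (f p.1, g p.2).

Lemma pm_lra f g : lie_ring_aut br f -> lie_ring_aut br g -> lie_ring_aut pb (pm f g).
Proof.
move=> Hf Hg; have [fi [_ Kf1 Kf2]] := lra_inv Hf; have [gi [_ Kg1 Kg2]] := lra_inv Hg.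
split.
- by exists (pm fi gi); case=> x y; rewrite /pm /= ?Kf1 ?Kg1 ?Kf2 ?Kg2.
- by case=> ? ? [? ?]; rewrite /pm /= (lra_add Hf) (lra_add Hg).
- by case=> ? ? [? ?]; rewrite /pm /= (lra_br Hf) (lra_br Hg).
Qed.

Lemma pm_laa f g : lie_alg_aut br f -> lie_alg_aut br g -> lie_alg_aut pb (pm f g).
Proof.
case=> Hf Zf [Hg Zg]; split; first exact: pm_lra.
by move=> a [x y]; rewrite /pm /= Zf Zg.
Qed.

Lemma field_aut_pm s1 s2 : field_aut br s1 -> field_aut br s2 -> field_aut pb (pm s1 s2).
Proof.
move=> [k1 [N1 [t1 [I1 D1 F1 C1 S1]]]] [k2 [N2 [t2 [I2 D2 F2 C2 S2]]]].
pose N i := match split i with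
  | inl j => (linof il @: N1 j)%VS | inr j => (linof ir @: N2 j)%VS end.
pose t i := match split i with
  | inl j => fun p : P => il (t1 j p.1) | inr j => fun p : P => ir (t2 j p.2) end.
have NL : forall j p, p \in N (lshift k2 j) <-> exists2 u, u \in N1 j & p = il u.
  by move=> j p; rewrite /N split_l; apply: memLl.
have NR : forall j p, p \in N (rshift k1 j) <-> exists2 u, u \in N2 j & p = ir u.
  by move=> j p; rewrite /N split_r; apply: memLr.
have tL : forall j p, t (lshift k2 j) p = il (t1 j p.1) by move=> j p; rewrite /t split_l.
have tR : forall j p, t (rshift k1 j) p = ir (t2 j p.2) by move=> j p; rewrite /t split_r.
have decomp : forall v : 'I_(k1 + k2) -> P, (forall i, v i \in N i) ->
   [/\ forall j, v (lshift k2 j) = il (v (lshift k2 j)).1,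
       forall j, (v (lshift k2 j)).1 \in N1 j,
       forall j, v (rshift k1 j) = ir (v (rshift k1 j)).2 &
       forall j, (v (rshift k1 j)).2 \in N2 j].
  move=> v Hv; split.
  - by move=> j; have /NL [u _ ->] := Hv (lshift k2 j).
  - by move=> j; have /NL [u Hu ->] := Hv (lshift k2 j).
  - by move=> j; have /NR [u _ ->] := Hv (rshift k1 j).
  - by move=> j; have /NR [u Hu ->] := Hv (rshift k1 j).
have sumE : forall v : 'I_(k1 + k2) -> P, (forall i, v i \in N i) ->
   \sum_(i < k1 + k2) v i = (\sum_(j < k1) (v (lshift k2 j)).1,
                             \sum_(j < k2) (v (rshift k1 j)).2).
  move=> v Hv; have [E1 _ E2 _] := decomp v Hv.
  rewrite big_split_ord /=.
  have -> : \sum_(j < k1) v (lshift k2 j) = \sum_(j < k1) il (v (lshift k2 j)).1.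
    by apply: eq_bigr => j _; exact: E1.
  have -> : \sum_(j < k2) v (rshift k1 j) = \sum_(j < k2) ir (v (rshift k1 j)).2.
    by apply: eq_bigr => j _; exact: E2.
  by rewrite /il /ir !pair_sum !big1_eq pairD addr0 add0r.
exists (k1 + k2), N, t; split.
- move=> i x y; rewrite /N; case: (split i) => j.
    by case/memLl => u Hu ->; apply/memLl; exists (br u y.1); [exact: I1 | rewrite pbE /= br0l].
  by case/memLr => u Hu ->; apply/memLr; exists (br u y.2); [exact: I2 | rewrite pbE /= br0l].
- apply/directv_sum_independent => us Hus Hsum i _.
  have Hus' : forall i, us i \in N i by move=> i'; exact: Hus.
  have [E1 M1 E2 M2] := decomp us Hus'.
  have := congr1 fst Hsum; have := congr1 snd Hsum.
  rewrite (sumE us Hus') /= => H2 H1.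
  have Z1 := directv_sum_independent D1 _ (fun j _ => M1 j) H1.
  have Z2 := directv_sum_independent D2 _ (fun j _ => M2 j) H2.
  rewrite -(splitK i); case: (split i) => j /=.
    by rewrite E1 Z1.
  by rewrite E2 Z2.
- apply/vspaceP => p; rewrite memvf; apply/memv_sumP.
  have : p.1 \in (\sum_(j < k1) N1 j)%VS by rewrite F1 memvf.
  case/memv_sumP => v1 Hv1 E1.
  have : p.2 \in (\sum_(j < k2) N2 j)%VS by rewrite F2 memvf.
  case/memv_sumP => v2 Hv2 E2.
  exists (fun i => match split i with inl j => il (v1 j) | inr j => ir (v2 j) end).
    by move=> i _; rewrite /N; case: (split i) => j; [apply/memLl | apply/memLr]; eexists; eauto.
  rewrite big_split_ord /=.
  rewrite (eq_bigr (fun j => il (v1 j))); last by move=> j _; rewrite split_l.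
  rewrite (eq_bigr (fun j => ir (v2 j))); last by move=> j _; rewrite split_r.
  rewrite /il /ir !pair_sum !big1_eq pairD addr0 add0r -E1 -E2.
  by case: p {E1 E2}.
- move=> i; rewrite /N /t; case: (split i) => j.
    case: (C1 j) => [Hid | Hc].
      by left => x /memLl [u Hu ->]; rewrite /= Hid.
    right; apply: (@cfa_transfer R V P br pb il fst ilL _ _ _ (N1 j) _ (t1 j) _ Hc).
    + by move=> a [? ?] [? ?].
    + by [].
    + by move=> x y; rewrite /il pbE /= br0l.
    + by move=> p; apply: memLl.
  case: (C2 j) => [Hid | Hc].
    by left => x /memLr [u Hu ->]; rewrite /= Hid.
  right; apply: (@cfa_transfer R V P br pb ir snd irL _ _ _ (N2 j) _ (t2 j) _ Hc).
  + by move=> a [? ?] [? ?].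
  + by [].
  + by move=> x y; rewrite /ir pbE /= br0l.
  + by move=> p; apply: memLr.
- move=> v Hv; have [E1 M1 E2 M2] := decomp v Hv.
  rewrite (sumE v Hv) /pm /=.
  rewrite (S1 (fun j => (v (lshift k2 j)).1)) // (S2 (fun j => (v (rshift k1 j)).2)) //.
  rewrite big_split_ord /=.
  rewrite (eq_bigr (fun j => il (t1 j (v (lshift k2 j)).1))); last by move=> j _; rewrite tL.
  rewrite (eq_bigr (fun j => ir (t2 j (v (rshift k1 j)).2))); last by move=> j _; rewrite tR.
  by rewrite /il /ir !pair_sum !big1_eq pairD addr0 add0r.
Qed.
End ProdF.


Section Final.
Variables (R : realType) (V : vectType R) (br : V -> V -> V).
Variable Hlb : lie_bracket br.
Variable Hns : nonsingular br.
Variable Hpac : partial_automatic_continuity br.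
Local Notation pb := (prod_bracket br).
Local Notation P := (V * V)%type.
Local Notation swp := (@swp R V).
Variables (x0 y0 : V).
Variable Hxy : br x0 y0 != 0.

Lemma half G : lie_ring_aut pb G -> ~ central br (G (x0, 0)).1 ->
  (forall Y, central br (G (0, Y)).1) ->
  exists k, lie_ring_aut br k /\ forall X, central br ((G (X, 0)).1 - k X).
Proof.
move=> HG Ha Hc1.
have Hc2 := L2b Hlb Hns Hxy HG Ha.
have nc0 := x0_nc Hxy.
apply: (@k_exists R V br Hlb Hns (fun X => (G (X, 0)).1) x0 nc0).
- move=> x y /=; have -> : ((x + y, 0) : P) = (x, 0) + (y, 0) by rewrite pairD addr0.
  by rewrite (lra_add HG).
- by move=> x y /=; rewrite -pb_l // (lra_br HG) pbE.
- move=> x /= Hx.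
  have Hcp : central pb (G (x, 0)) by apply/central_pb; split.
  have [Gi [HGi K1 K2]] := lra_inv HG.
  have := lra_central HGi Hcp; rewrite K1 => /central_pb [] //.
- move=> y; have [p Hp] := lra_surj HG (y, 0).
  exists p.1; rewrite /=.
  have : (G p).1 = y by rewrite Hp.
  rewrite {1}(pair_split p) (lra_add HG) /= => <-.
  by rewrite addrC addKr; apply: Hc1.
- move=> c Hc /=.
  have Hcp : central pb ((c, 0) : P) by apply/central_pb; split => //; apply: central0.
  by have /central_pb [] := lra_central HG Hcp.
- move=> d Hd /= H0.
  have : G (d, 0) = G 0.
    rewrite (G0 HG) [LHS]surjective_pairing H0 (L2a Hlb Hns Hxy HG Ha Hd) //.
  by move/(lra_inj HG)/(congr1 fst).
- move=> d Hd; have [d' [Hd' E]] := L2c Hlb Hns Hxy HG Ha Hd.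
  by exists d'; rewrite E.
- move=> d Hd /=; have [y <-] := Hns nc0 Hd.
  by rewrite -pb_l // (lra_br HG) pbE; apply: derived_br.
Qed.

Lemma swpD (p q : P) : swp (p + q) = swp p + swp q.
Proof. by case: p q => ? ? [? ?]. Qed.
Lemma swpN (p : P) : swp (- p) = - swp p.
Proof. by case: p. Qed.
Lemma central_swp p : central pb p -> central pb (swp p).
Proof. by case/central_pb => H1 H2; apply/central_pb. Qed.

Lemma case1 G : lie_ring_aut pb G -> ~ central br (G (x0, 0)).1 ->
  exists mu f s, [/\ central_aut pb mu, lie_alg_aut pb f,
                    field_aut pb s & forall x, G x = mu (f (s x))].
Proof.
move=> HG Ha.
pose G' := swp \o G \o swp.
have HG' : lie_ring_aut pb G' by apply: lra_comp; [apply: lra_comp; [exact: swp_lra | exact: HG] | exact: swp_lra].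
have Ha' : ~ central br (G' (x0, 0)).1.
  rewrite /G' /=; move=> Hc.
  have HGs : lie_ring_aut pb (G \o swp) by apply: lra_comp; [exact: HG | exact: swp_lra].
  by apply: (L1a Hlb Hxy HGs); split => //=; apply: (L3 Hlb Hns Hxy HG Ha).
have Hc2 := L2b Hlb Hns Hxy HG Ha.
have Hc1 := L2b Hlb Hns Hxy HG' Ha'.
have [k1 [Hk1 Ek1]] := half HG Ha Hc1.
have [k2 [Hk2 Ek2]] := half HG' Ha' Hc2.
have [h1 [f1 [s1 [Hh1 Hf1 Hs1 E1 C1]]]] := pac_step Hpac Hk1.
have [h2 [f2 [s2 [Hh2 Hf2 Hs2 E2 C2]]]] := pac_step Hpac Hk2.
apply: (decomp_from HG (pm_lra Hh1 Hh2) _ (pm_laa Hf1 Hf2) (field_aut_pm Hlb Hs1 Hs2)).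
- move=> p; apply/central_pb.
  have Gp : G p = G (p.1, 0) + G (0, p.2) by rewrite {1}(pair_split p) (lra_add HG).
  rewrite Gp /=; split.
    have E : (G (p.1, 0)).1 + (G (0, p.2)).1 - h1 p.1
       = ((G (p.1, 0)).1 - k1 p.1) + (k1 p.1 - h1 p.1) + (G (0, p.2)).1.
      by rewrite addrA subrK addrAC.
    rewrite E; apply: (centralD Hlb); first apply: (centralD Hlb).
    + exact: Ek1.
    + exact: C1.
    + exact: Hc1.
  have E : (G (p.1, 0)).2 + (G (0, p.2)).2 - h2 p.2
     = ((G (0, p.2)).2 - k2 p.2) + (k2 p.2 - h2 p.2) + (G (p.1, 0)).2.
    have E' : (G (0, p.2)).2 - k2 p.2 + (k2 p.2 - h2 p.2) = (G (0, p.2)).2 - h2 p.2.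
      by rewrite addrA subrK.
    rewrite E'.
    by rewrite [RHS]addrC addrA.
  rewrite E; apply: (centralD Hlb); first apply: (centralD Hlb).
  + exact: (Ek2 p.2).
  + exact: C2.
  + exact: Hc2.
- by move=> [x y]; rewrite /pm /= E1 E2.
Qed.
End Final.

Unset Implicit Arguments.
Theorem proposition3p5 (R : realType) (V : vectType R) (br : V -> V -> V) :
  lie_bracket br -> two_step_nilpotent br -> nonsingular br ->
  partial_automatic_continuity br ->
  partial_automatic_continuity (prod_bracket br).
Proof.
move=> Hlb [_ [x0 [y0 Hxy]]] Hns Hpac g Hg.
case: (classic (central br (g (x0, 0)).1)) => Hc; last exact: (case1 Hlb Hns Hpac Hxy Hg Hc).
pose G' := @swp R V \o g.
have HG' : lie_ring_aut (prod_bracket br) G' by apply: lra_comp; [exact: swp_lra | exact: Hg].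
have Ha' : ~ central br (G' (x0, 0)).1.
  by move=> H; apply: (L1a Hlb Hxy Hg); split.
have [mu [f [s [[Hmu Cmu] Hf Hs E]]]] := case1 Hlb Hns Hpac Hxy HG' Ha'.
exists (@swp R V \o mu \o @swp R V), (@swp R V \o f), s; split => //.
- split; first by apply: lra_comp; [apply: lra_comp; [exact: swp_lra | exact: Hmu] | exact: swp_lra].
  move=> x /=; have -> : swp (mu (swp x)) - x = swp (mu (swp x) - swp x).
    by rewrite swpD swpN swpK.
  exact: central_swp.
- by apply: laa_comp => //; exact: swp_laa.
- by move=> x /=; rewrite swpK -E /G' /= swpK.
Qed.
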